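(* Let $\|\cdot\|_C$ be any norm on $\mathbb{R}^N$ and $\|\cdot\|_R$ any norm on $\mathbb{R}^P$, and let $f_D^M$ be defined as in the context. Then for every $X\in\mathbb{R}^{N\times P}$ the limit $f_D^\infty(X)=\lim_{M\to\infty} f_D^M(X)$ exists (and is finite), and the map $X\mapsto f_D^\infty(X)$ is a norm on $\mathbb{R}^{N\times P}$.
   Context: For $M\ge 1$ and $X\in\mathbb{R}^{N\times P}$, define $$f_D^M(X)=\inf\Big\{\tfrac12\sum_{m=1}^M\big(\|u_m\|_C^2+\|v_m\|_R^2\big)\;:\;U=[u_1,\dots,u_M]\in\mathbb{R}^{N\times M},\ V=[v_1,\dots,v_M]\in\mathbb{R}^{P\times M},\ X=UV^\top\Big\},$$ where $u_m$, $v_m$ denote the $m$-th columns of $U$, $V$; if $M<\operatorname{rank}X$ the set is empty and $f_D^M(X)=+\infty$. The limit $f_D^\infty(X)$ is denoted $\|X\|_D$ (the ''decomposition norm''). *)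

(* Defs.v *)
From Stdlib Require Import Reals.
Open Scope R_scope.

(* Index set {0,...,n-1}. Vectors in R^n are functions Fin n -> R. *)
Definition Fin (n : nat) : Type := {i : nat | (i < n)%nat}.

Definition is_norm {I : Type} (nrm : (I -> R) -> R) : Prop :=
  (forall v, 0 <= nrm v) /\
  (forall v, nrm v = 0 -> forall i, v i = 0) /\
  (forall (a : R) v, nrm (fun i => a * v i) = Rabs a * nrm v) /\
  (forall u v, nrm (fun i => u i + v i) <= nrm u + nrm v).

Fixpoint sumR (M : nat) (f : nat -> R) : R :=
  match M with
  | O => 0
  | S k => sumR k f + f k
  end.

Definition Mat (N P : nat) : Type := Fin N * Fin P -> R.

(* The set of values (1/2) sum_{m<M} (||u_m||_C^2 + ||v_m||_R^2) over all
   factorizations X = U V^T with M columns; column m of U is (fun i => U i m),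
   only columns m < M are used. *)
Definition decomp_vals (N P : nat) (nC : (Fin N -> R) -> R) (nR : (Fin P -> R) -> R)
    (M : nat) (X : Mat N P) (v : R) : Prop :=
  exists (U : Fin N -> nat -> R) (V : Fin P -> nat -> R),
    (forall i j, X (i, j) = sumR M (fun m => U i m * V j m)) /\
    v = / 2 * sumR M (fun m => (nC (fun i => U i m)) ^ 2 + (nR (fun j => V j m)) ^ 2).

Definition is_inf (S : R -> Prop) (v : R) : Prop :=
  (forall x, S x -> v <= x) /\ (forall b, (forall x, S x -> b <= x) -> b <= v).

(* f_D^M(X) is finite and equal to v: the feasible set is nonempty and v is its infimum.
   (When the feasible set is empty, f_D^M(X) = +infinity and no real v satisfies this.) *)
Definition fDM_is (N P : nat) nC nR (M : nat) (X : Mat N P) (v : R) : Prop :=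
  (exists x, decomp_vals N P nC nR M X x) /\ is_inf (decomp_vals N P nC nR M X) v.

Definition fD_tends_to (N P : nat) nC nR (X : Mat N P) (L : R) : Prop :=
  forall eps, eps > 0 -> exists M0 : nat, forall M : nat, (M0 <= M)%nat ->
    exists v, fDM_is N P nC nR M X v /\ Rabs (v - L) < eps.

(* Main.v *)
Require Import Defs.
From Stdlib Require Import Arith Reals Lra Lia Psatz Classical FunctionalExtensionality ProofIrrelevance ClassicalEpsilon.
Open Scope R_scope.

Lemma norm_zero {I} (nC : (I -> R) -> R) : is_norm nC -> nC (fun _ => 0) = 0.
Proof.
  intros (Hpos & Hdef & Hhom & Htri).
  assert (E : (fun _ : I => 0) = (fun i => 0 * (fun _ : I => 0) i)).
  { apply functional_extensionality; intros; simpl; ring. }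
  rewrite E, Hhom, Rabs_R0; ring.
Qed.

Lemma norm_lin {I} (nC : (I -> R) -> R) (a : R) u v : is_norm nC ->
  nC (fun i => u i + a * v i) <= nC u + Rabs a * nC v.
Proof.
  intros Hn. pose proof Hn as (Hpos & Hdef & Hhom & Htri).
  rewrite <- Hhom. apply (Htri u (fun i => a * v i)).
Qed.

Lemma norm_eq {I} (nC : (I -> R) -> R) u v : (forall i, u i = v i) -> nC u = nC v.
Proof. intros H. f_equal. apply functional_extensionality; auto. Qed.

Lemma arch (x : R) : 0 < x -> exists n : nat, / (INR n + 1) < x.
Proof.
  intros Hx. destruct (archimed_cor1 x Hx) as [n [Hn Hn0]]. exists n.
  apply Rle_lt_trans with (/ INR n); auto.
  apply Rinv_le_contravar. apply lt_0_INR; lia. lra.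
Qed.

Lemma inv_pos (n : nat) : 0 < / (INR n + 1).
Proof. apply Rinv_0_lt_compat. pose proof (pos_INR n); lra. Qed.

Lemma inv_mono (n m : nat) : (n <= m)%nat -> / (INR m + 1) <= / (INR n + 1).
Proof. intros. apply Rinv_le_contravar. pose proof (pos_INR n); lra. apply le_INR in H; lra. Qed.

Lemma small_le (x K : R) : (forall n : nat, x <= K * / (INR n + 1)) -> x <= 0.
Proof.
  intros H. apply Rnot_lt_le; intro Hx.
  assert (HK : 0 < K). { specialize (H 0%nat). simpl in H. rewrite Rplus_0_l, Rinv_1 in H. lra. }
  destruct (arch (x / K)) as [n Hn]. { apply Rdiv_lt_0_compat; lra. }
  specialize (H n).
  assert (K * / (INR n + 1) < K * (x / K)) by (apply Rmult_lt_compat_l; lra).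
  replace (K * (x / K)) with x in H0 by (field; lra). lra.
Qed.

Lemma lim_bound (u : nat -> R) l a b n : Un_cv u l ->
  (forall m, (n <= m)%nat -> Rabs (u m - a) <= b) -> Rabs (l - a) <= b.
Proof.
  intros H H0. apply Rnot_lt_le; intro Hc.
  destruct (H (Rabs (l-a) - b)) as [M HM]; [lra|].
  specialize (HM (max n M) (Nat.le_max_r _ _)). specialize (H0 (max n M) (Nat.le_max_l _ _)).
  unfold R_dist in HM. pose proof (Rabs_triang (l - u (max n M)) (u (max n M) - a)).
  replace (l - u (max n M) + (u (max n M) - a)) with (l-a) in H1 by ring.
  rewrite Rabs_minus_sym in HM. lra.
Qed.

Definition ebas {N} (k : nat) : Fin N -> R := fun i => if Nat.eq_dec (proj1_sig i) k then 1 else 0.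
Definition supp_lt {N} (k:nat) (u : Fin N -> R) := forall i : Fin N, (k <= proj1_sig i)%nat -> u i = 0.
Definition trunc {N} (k:nat) (u:Fin N -> R) : Fin N -> R := fun i => if Compare_dec.lt_dec (proj1_sig i) k then u i else 0.
Definition coef {N} (u : Fin N -> R) (k:nat) : R :=
  match Compare_dec.lt_dec k N with left H => u (exist _ k H) | right _ => 0 end.

Lemma trunc_S N (u : Fin N -> R) k : trunc (S k) u = fun i => trunc k u i + coef u k * ebas k i.
Proof.
  apply functional_extensionality; intros [i Hi]; unfold trunc, coef, ebas; simpl.
  destruct (lt_dec i (S k)), (lt_dec i k), (Nat.eq_dec i k); try lia; try lra.
  subst. destruct (lt_dec k N) as [Hk|]; [|lia]. rewrite (proof_irrelevance _ Hi Hk). ring.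
Qed.

Lemma upper N (nC : (Fin N -> R) -> R) : is_norm nC -> forall u Bd, 0 <= Bd ->
  (forall i, Rabs (u i) <= Bd) -> nC u <= Bd * sumR N (fun m => nC (ebas m)).
Proof.
  intros Hn u Bd HB Hu. pose proof Hn as (Hpos & Hdef & Hhom & Htri).
  assert (forall k, nC (trunc k u) <= Bd * sumR k (fun m => nC (ebas m))).
  { induction k; simpl.
    - replace (trunc 0 u) with (fun _ : Fin N => 0). rewrite (norm_zero _ Hn); lra.
      apply functional_extensionality; intros [i Hi]; unfold trunc; simpl. destruct (lt_dec i 0); [lia|auto].
    - rewrite trunc_S. eapply Rle_trans. apply norm_lin; auto.
      assert (Rabs (coef u k) <= Bd). { unfold coef. destruct (lt_dec k N); auto. rewrite Rabs_R0; lra. }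
      pose proof (Hpos (ebas k)). nra. }
  replace u with (trunc N u); auto.
  apply functional_extensionality; intros [i Hi]; unfold trunc; simpl. destruct (lt_dec i N); [auto|lia].
Qed.

Lemma lower_step N (nC : (Fin N -> R) -> R) (Hn : is_norm nC) k (Hk : (k < N)%nat) c :
  0 < c -> (forall u, supp_lt k u -> forall i, c * Rabs (u i) <= nC u) ->
  exists d, 0 < d /\ forall w, supp_lt k w -> d <= nC (fun i => w i + ebas k i).
Proof.
  intros Hc IH. pose proof Hn as (Hpos & Hdef & Hhom & Htri).
  apply NNPP; intro Hno.
  assert (Hseq : forall n:nat, exists w, supp_lt k w /\ nC (fun i => w i + ebas k i) < / (INR n + 1)).
  { intro n. apply NNPP; intro Hn2. apply Hno. exists (/ (INR n + 1)). split. apply inv_pos.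
    intros w Hw. apply Rnot_lt_le. intro. apply Hn2. exists w; auto. }
  set (W := fun n => proj1_sig (constructive_indefinite_description _ (Hseq n))).
  assert (HW : forall n, supp_lt k (W n) /\ nC (fun i => W n i + ebas k i) < / (INR n + 1)).
  { intro n. unfold W. destruct (constructive_indefinite_description _ _); auto. }
  assert (Hcb : forall n m i, (n <= m)%nat -> Rabs (W m i - W n i) <= (2/c) * / (INR n + 1)).
  { intros n m i Hnm.
    assert (Hs : supp_lt k (fun i => W m i - W n i)).
    { intros j Hj. destruct (HW n) as [Hn1 _]. destruct (HW m) as [Hm1 _].
      rewrite (Hn1 j Hj), (Hm1 j Hj); ring. }
    pose proof (IH _ Hs i) as H1.
    assert (H2 : nC (fun i => W m i - W n i) <= nC (fun i => W m i + ebas k i) + nC (fun i => W n i + ebas k i)).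
    { rewrite (norm_eq nC (fun i => W m i - W n i) (fun i => (W m i + ebas k i) + (-1) * (W n i + ebas k i)))
        by (intros; ring).
      eapply Rle_trans. apply (norm_lin nC (-1) (fun i => W m i + ebas k i) (fun i => W n i + ebas k i) Hn).
      replace (Rabs (-1)) with 1 by (rewrite Rabs_left; lra). lra. }
    destruct (HW n) as [_ Hn2]. destruct (HW m) as [_ Hm2]. pose proof (inv_mono n m Hnm).
    assert (c * Rabs (W m i - W n i) <= 2 * / (INR n + 1)) by lra.
    replace (2 / c * / (INR n + 1)) with (/ c * (2 * / (INR n + 1))) by (pose proof (pos_INR n); field; repeat split; lra).
    apply Rmult_le_reg_l with c; auto. rewrite <- Rmult_assoc, Rinv_r; lra. }
  assert (Hcau : forall i, Cauchy_crit (fun n => W n i)).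
  { intros i eps Heps. destruct (arch (eps * c / 2)) as [n0 Hn0].
    { apply Rdiv_lt_0_compat; nra. }
    exists n0. intros n m Hn1 Hm1. unfold R_dist.
    assert (forall a b, (n0 <= a)%nat -> (a <= b)%nat -> Rabs (W b i - W a i) < eps).
    { intros a b Ha Hab. eapply Rle_lt_trans. apply Hcb; auto.
      pose proof (inv_mono n0 a Ha).
      apply Rle_lt_trans with (2 / c * / (INR n0 + 1)).
      apply Rmult_le_compat_l; auto. apply Rlt_le, Rdiv_lt_0_compat; lra.
      apply Rlt_le_trans with (2 / c * (eps * c / 2)). apply Rmult_lt_compat_l; auto. apply Rdiv_lt_0_compat; lra.
      right; field; lra. }
    destruct (le_ge_dec n m).
    - rewrite Rabs_minus_sym. apply H; auto.
    - apply H; auto. }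
  set (w := fun i => proj1_sig (R_complete _ (Hcau i))).
  assert (Hwb : forall n i, Rabs (w i - W n i) <= (2/c) * / (INR n + 1)).
  { intros n i. unfold w. destruct (R_complete _ (Hcau i)) as [l Hl]. simpl.
    apply (lim_bound _ _ _ _ n Hl). intros m Hm. apply Hcb; auto. }
  set (Bs := sumR N (fun m => nC (ebas m))).
  assert (HBs : 0 <= Bs).
  { pose proof (upper N nC Hn (fun _ => 1) 1 ltac:(lra) ltac:(intros; cbv beta; rewrite Rabs_R1; lra)). 
    pose proof (Hpos (fun _ => 1)). unfold Bs. lra. }
  assert (Hz : nC (fun i => w i + ebas k i) <= 0).
  { apply (small_le _ (1 + 2 / c * Bs)). intro n.
    rewrite (norm_eq nC (fun i => w i + ebas k i) (fun i => (W n i + ebas k i) + 1 * (w i - W n i))) by (intros; ring).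
    eapply Rle_trans. apply norm_lin; auto. rewrite Rabs_R1.
    pose proof (upper N nC Hn (fun i => w i - W n i) ((2/c) * / (INR n + 1))) as Hu.
    destruct (HW n) as [_ Hn2].
    assert (0 <= 2 / c * / (INR n + 1)). { apply Rlt_le, Rmult_lt_0_compat. apply Rdiv_lt_0_compat; lra. apply inv_pos. }
    specialize (Hu H (fun i => Hwb n i)). fold Bs in Hu. nra. }
  pose proof (Hdef _ (Rle_antisym _ _ Hz (Hpos _)) (exist _ k Hk)) as H0. simpl in H0.
  unfold ebas in H0; simpl in H0. destruct (Nat.eq_dec k k) as [_|]; [|lia].
  assert (Hone : 1 <= 0).
  { apply (small_le 1 (2/c)). intro n. pose proof (Hwb n (exist _ k Hk)).
    destruct (HW n) as [Hs _]. rewrite (Hs (exist _ k Hk)) in H by (simpl; lia).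
    replace (w (exist _ k Hk) - 0) with (-1) in H by lra. replace (Rabs (-1)) with 1 in H by (rewrite Rabs_left; lra). auto. }
  lra.
Qed.

Lemma lower_all N (nC : (Fin N -> R) -> R) (Hn : is_norm nC) : forall k, (k <= N)%nat ->
  exists c, 0 < c /\ forall u, supp_lt k u -> forall i, c * Rabs (u i) <= nC u.
Proof.
  pose proof Hn as (Hpos & Hdef & Hhom & Htri).
  induction k; intros Hk.
  - exists 1. split; [lra|]. intros u Hu i. rewrite (Hu i (Nat.le_0_l _)), Rabs_R0. rewrite Rmult_0_r; apply Hpos.
  - destruct IHk as [c [Hc IH]]; [lia|]. assert (Hk' : (k < N)%nat) by lia.
    destruct (lower_step N nC Hn k Hk' c Hc IH) as [d [Hd Hdw]].
    set (E := nC (ebas k)). assert (HE : 0 <= E) by apply Hpos.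
    assert (Hc2 : 0 < c * d / (d + E)) by (apply Rdiv_lt_0_compat; nra).
    exists (Rmin d (c * d / (d + E))). split. apply Rmin_pos; lra.
    intros u Hu i.
    set (a := u (exist _ k Hk')).
    set (w := fun i => u i + (- a) * ebas k i).
    assert (Hws : supp_lt k w).
    { intros [j Hj] Hkj. unfold w, ebas. simpl in *. destruct (Nat.eq_dec j k).
      - subst. unfold a. rewrite (proof_irrelevance _ Hj Hk'). ring.
      - rewrite (Hu (exist _ j Hj)) by (simpl; lia). ring. }
    assert (Hda : d * Rabs a <= nC u).
    { destruct (Req_dec a 0) as [Ha|Ha]. rewrite Ha, Rabs_R0, Rmult_0_r; apply Hpos.
      rewrite (norm_eq nC u (fun i => a * ((/a * w i) + ebas k i))) by (intros; unfold w; cbv beta; field; exact Ha).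
      rewrite Hhom.
      assert (Hs2 : supp_lt k (fun i => / a * w i)). { intros j Hj. rewrite (Hws j Hj); ring. }
      pose proof (Hdw _ Hs2). pose proof (Rabs_pos a). nra. }
    assert (Hwn : nC w <= nC u + Rabs a * E).
    { unfold w. eapply Rle_trans. apply norm_lin; auto. rewrite Rabs_Ropp. fold E. lra. }
    pose proof (Rmin_l d (c * d / (d + E))). pose proof (Rmin_r d (c * d / (d + E))).
    set (m := Rmin d (c * d / (d + E))) in *.
    destruct i as [j Hj]. destruct (lt_eq_lt_dec j k) as [[Hlt|Heq]|Hgt].
    + assert (Hui : u (exist _ j Hj) = w (exist _ j Hj)).
      { unfold w, ebas; simpl. destruct (Nat.eq_dec j k); [lia|ring]. }
      pose proof (IH w Hws (exist _ j Hj)) as H1. rewrite <- Hui in H1.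
      assert (c * d * Rabs (u (exist _ j Hj)) <= (d + E) * nC u) by nra.
      assert (c * d / (d + E) * Rabs (u (exist _ j Hj)) <= nC u).
      { unfold Rdiv. apply Rmult_le_reg_l with (d + E). lra.
        replace ((d + E) * (c * d * / (d + E) * Rabs (u (exist _ j Hj)))) with (c * d * Rabs (u (exist _ j Hj))) by (field; lra).
        lra. }
      pose proof (Rabs_pos (u (exist _ j Hj))). nra.
    + subst j. fold a. rewrite (proof_irrelevance _ Hj Hk'). fold a. pose proof (Rabs_pos a). nra.
    + rewrite (Hu (exist _ j Hj)) by (simpl; lia). rewrite Rabs_R0, Rmult_0_r. apply Hpos.
Qed.

Lemma coord_bound N (nC : (Fin N -> R) -> R) : is_norm nC ->
  exists c, 0 < c /\ forall u i, c * Rabs (u i) <= nC u.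
Proof.
  intros Hn. destruct (lower_all N nC Hn N (le_n N)) as [c [Hc H]].
  exists c. split; auto. intros u i. apply H. intros [j Hj] Hj'. simpl in Hj'. lia.
Qed.

Lemma sumR_ext_lt M f g : (forall m, (m < M)%nat -> f m = g m) -> sumR M f = sumR M g.
Proof. induction M; simpl; intros; auto. rewrite IHM by (intros; apply H; lia). rewrite H by lia. auto. Qed.

Lemma sumR_ext M f g : (forall m, f m = g m) -> sumR M f = sumR M g.
Proof. intros; apply sumR_ext_lt; auto. Qed.

Lemma sumR_le M f g : (forall m, (m < M)%nat -> f m <= g m) -> sumR M f <= sumR M g.
Proof. induction M; simpl; intros; [lra|]. pose proof (H M (Nat.lt_succ_diag_r M)). pose proof (IHM ltac:(intros; apply H; lia)). lra. Qed.

Lemma sumR_nonneg M f : (forall m, (m < M)%nat -> 0 <= f m) -> 0 <= sumR M f.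
Proof. intros. replace 0 with (sumR M (fun _ => 0)). apply sumR_le; auto. induction M; simpl; auto. rewrite IHM; [ring|intros; apply H; lia]. Qed.

Lemma sumR_scal M a f : sumR M (fun m => a * f m) = a * sumR M f.
Proof. induction M; simpl; [ring|]. rewrite IHM; ring. Qed.

Lemma sumR_add M f g : sumR M (fun m => f m + g m) = sumR M f + sumR M g.
Proof. induction M; simpl; [ring|]. rewrite IHM; ring. Qed.

Lemma sumR_abs M f : Rabs (sumR M f) <= sumR M (fun m => Rabs (f m)).
Proof. induction M; simpl. rewrite Rabs_R0; lra. eapply Rle_trans. apply Rabs_triang. lra. Qed.

Lemma sumR_split M1 M2 f : sumR (M1 + M2) f = sumR M1 f + sumR M2 (fun m => f (M1 + m)%nat).
Proof. induction M2; simpl. rewrite Nat.add_0_r; ring. rewrite Nat.add_succ_r. simpl. rewrite IHM2. ring. Qed.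

Definition Tvals (N P : nat) (nC : (Fin N -> R) -> R) (nR : (Fin P -> R) -> R)
    (M : nat) (X : Mat N P) (t : R) : Prop :=
  exists (U : Fin N -> nat -> R) (V : Fin P -> nat -> R),
    (forall i j, X (i, j) = sumR M (fun m => U i m * V j m)) /\
    t = sumR M (fun m => nC (fun i => U i m) * nR (fun j => V j m)).

Definition Tall N P nC nR (X : Mat N P) t := exists M, Tvals N P nC nR M X t.

Lemma inf_exists (S : R -> Prop) : (exists x, S x) -> (forall x, S x -> 0 <= x) -> exists v, is_inf S v.
Proof.
  intros [x0 Hx0] Hpos.
  destruct (completeness (fun y => S (- y))) as [m [Hub Hlub]].
  { exists 0. intros y Hy. apply Hpos in Hy. lra. }
  { exists (- x0). rewrite Ropp_involutive. auto. }
  exists (- m). split.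
  - intros x Hx. assert (- x <= m). { apply Hub. rewrite Ropp_involutive; auto. } lra.
  - intros b Hb. assert (m <= - b). { apply Hlub. intros y Hy. apply Hb in Hy. lra. } lra.
Qed.

Lemma inf_approx S v eps : is_inf S v -> 0 < eps -> exists x, S x /\ x < v + eps.
Proof.
  intros [Hlb Hglb] He. apply NNPP; intro H.
  assert (v + eps <= v). { apply Hglb. intros x Hx. apply Rnot_lt_le. intro. apply H. exists x; auto. }
  lra.
Qed.

Lemma inf_le S v w : is_inf S v -> (forall eps, 0 < eps -> exists x, S x /\ x <= w + eps) -> v <= w.
Proof.
  intros [Hlb Hglb] H. apply Rnot_lt_le; intro Hc.
  destruct (H ((v - w)/2)) as [x [Hx Hxw]]. lra. apply Hlb in Hx. lra.
Qed.

Section T.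
Context (N P : nat) (nC : (Fin N -> R) -> R) (nR : (Fin P -> R) -> R) (HC : is_norm nC) (HR : is_norm nR).

Lemma T_nonneg M X t : Tvals N P nC nR M X t -> 0 <= t.
Proof.
  intros (U & V & _ & ->). apply sumR_nonneg. intros m _.
  destruct HC as [h1 _]; destruct HR as [h2 _]. apply Rmult_le_pos; auto.
Qed.

Lemma T_pad M M' X t : Tvals N P nC nR M X t -> (M <= M')%nat -> Tvals N P nC nR M' X t.
Proof.
  intros (U & V & HX & Ht) HM.
  exists (fun i m => if lt_dec m M then U i m else 0), (fun j m => if lt_dec m M then V j m else 0).
  assert (Hs : forall f : nat -> R, sumR M' (fun m => if lt_dec m M then f m else 0) = sumR M f).
  { intros f. replace M' with (M + (M' - M))%nat by lia. rewrite sumR_split.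
    rewrite (sumR_ext_lt M _ f) by (intros m Hm; destruct (lt_dec m M); [auto|lia]).
    rewrite (sumR_ext (M' - M) _ (fun _ => 0)) by (intros m; destruct (lt_dec (M + m) M); [lia|auto]).
    clear. induction (M' - M)%nat; simpl; lra. }
  split.
  - intros i j. rewrite HX, <- Hs. apply sumR_ext. intros m. destruct (lt_dec m M); auto. ring.
  - rewrite Ht, <- Hs. apply sumR_ext. intros m. destruct (lt_dec m M); auto.
    rewrite (norm_zero _ HC); ring.
Qed.

Lemma T_nonempty X : exists t, Tvals N P nC nR P X t.
Proof.
  set (U := fun i m => match lt_dec m P with left H => X (i, exist _ m H) | right _ => 0 end).
  set (V := fun (j : Fin P) m => if Nat.eq_dec m (proj1_sig j) then 1 else 0).
  exists (sumR P (fun m => nC (fun i => U i m) * nR (fun j => V j m))), U, V. split; auto.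
  intros i [jj Hj].
  assert (forall M, sumR M (fun m => U i m * V (exist _ jj Hj) m) = if lt_dec jj M then X (i, exist _ jj Hj) else 0).
  { induction M; simpl. destruct (lt_dec jj 0); [lia|auto].
    rewrite IHM. unfold V; simpl. destruct (Nat.eq_dec M jj).
    - subst. unfold U. destruct (lt_dec jj jj); [lia|]. destruct (lt_dec jj (S jj)); [|lia].
      destruct (lt_dec jj P) as [H|]; [|lia]. rewrite (proof_irrelevance _ H Hj). ring.
    - destruct (lt_dec jj M), (lt_dec jj (S M)); try lia; ring. }
  rewrite H. destruct (lt_dec jj P); [auto|lia].
Qed.

Lemma T_concat M1 M2 X Y t1 t2 : Tvals N P nC nR M1 X t1 -> Tvals N P nC nR M2 Y t2 ->
  Tvals N P nC nR (M1 + M2) (fun ij => X ij + Y ij) (t1 + t2).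
Proof.
  intros (U1 & V1 & HX & Ht1) (U2 & V2 & HY & Ht2).
  exists (fun i m => if lt_dec m M1 then U1 i m else U2 i (m - M1)%nat),
         (fun j m => if lt_dec m M1 then V1 j m else V2 j (m - M1)%nat).
  split.
  - intros i j. rewrite sumR_split, HX, HY. f_equal.
    + apply sumR_ext_lt. intros m Hm. destruct (lt_dec m M1); [auto|lia].
    + apply sumR_ext. intros m. destruct (lt_dec (M1 + m) M1); [lia|]. replace (M1 + m - M1)%nat with m by lia. auto.
  - rewrite sumR_split, Ht1, Ht2. f_equal.
    + apply sumR_ext_lt. intros m Hm. destruct (lt_dec m M1); [auto|lia].
    + apply sumR_ext. intros m. destruct (lt_dec (M1 + m) M1); [lia|]. replace (M1 + m - M1)%nat with m by lia. auto.
Qed.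

Lemma T_scale M X t a : Tvals N P nC nR M X t -> Tvals N P nC nR M (fun ij => a * X ij) (Rabs a * t).
Proof.
  intros (U & V & HX & Ht). exists (fun i m => a * U i m), V. split.
  - intros i j. rewrite HX, <- sumR_scal. apply sumR_ext; intros; ring.
  - rewrite Ht, <- sumR_scal. apply sumR_ext; intros m. destruct HC as (_ & _ & Hh & _). rewrite Hh. ring.
Qed.

Lemma T_zero X : Tvals N P nC nR 0 (fun ij => 0 * X ij) 0.
Proof. exists (fun _ _ => 0), (fun _ _ => 0). split; simpl; auto. intros; ring. Qed.

Lemma T_lower cC cR : 0 < cC -> 0 < cR -> (forall u i, cC * Rabs (u i) <= nC u) ->
  (forall v j, cR * Rabs (v j) <= nR v) ->
  forall M X t, Tvals N P nC nR M X t -> forall i j, cC * cR * Rabs (X (i, j)) <= t.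
Proof.
  intros HcC HcR HbC HbR M X t (U & V & HX & Ht) i j. rewrite HX, Ht.
  eapply Rle_trans. apply Rmult_le_compat_l. nra. apply sumR_abs.
  rewrite <- sumR_scal. apply sumR_le. intros m _.
  pose proof (HbC (fun i => U i m) i). pose proof (HbR (fun j => V j m) j). simpl in *.
  rewrite Rabs_mult. pose proof (Rabs_pos (U i m)). pose proof (Rabs_pos (V j m)). replace (cC * cR * (Rabs (U i m) * Rabs (V j m))) with ((cC * Rabs (U i m)) * (cR * Rabs (V j m))) by ring. apply Rmult_le_compat; auto; apply Rmult_le_pos; lra.
Qed.

Lemma S_ge_T M X x : decomp_vals N P nC nR M X x -> exists t, Tvals N P nC nR M X t /\ t <= x.
Proof.
  intros (U & V & HX & Hx). exists (sumR M (fun m => nC (fun i => U i m) * nR (fun j => V j m))).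
  split. exists U, V; auto. rewrite Hx, <- sumR_scal. apply sumR_le. intros m _.
  pose proof (pow2_ge_0 (nC (fun i => U i m) - nR (fun j => V j m))). simpl in *. lra.
Qed.

Lemma S_nonneg M X x : decomp_vals N P nC nR M X x -> 0 <= x.
Proof. intros H. destruct (S_ge_T M X x H) as [t [Ht Hle]]. pose proof (T_nonneg _ _ _ Ht). lra. Qed.

Lemma T_in_S M X t : Tvals N P nC nR M X t -> decomp_vals N P nC nR M X t.
Proof.
  intros (U & V & HX & Ht).
  pose proof HC as (hC1 & hC2 & hC3 & _). pose proof HR as (hR1 & hR2 & hR3 & _).
  set (a := fun m => nC (fun i => U i m)). set (b := fun m => nR (fun j => V j m)).
  set (sc := fun m => if Rlt_dec 0 (a m * b m) then sqrt (b m / a m) else 0).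
  set (tc := fun m => if Rlt_dec 0 (a m * b m) then / sqrt (b m / a m) else 0).
  exists (fun i m => sc m * U i m), (fun j m => tc m * V j m). split.
  - intros i j. rewrite HX. apply sumR_ext. intros m. unfold sc, tc.
    destruct (Rlt_dec 0 (a m * b m)) as [Hp|Hp].
    + assert (0 < a m) by (pose proof (hC1 (fun i => U i m)); fold (a m) in *; destruct (Rle_lt_or_eq_dec _ _ H); [auto|rewrite <- e in Hp; lra]).
      assert (0 < b m) by (pose proof (hR1 (fun j => V j m)); fold (b m) in *; nra).
      assert (0 < sqrt (b m / a m)) by (apply sqrt_lt_R0; apply Rdiv_lt_0_compat; auto).
      field. lra.
    + assert (a m * b m = 0). { pose proof (hC1 (fun i => U i m)). pose proof (hR1 (fun j => V j m)). fold (a m) (b m) in *. nra. }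
      destruct (Rmult_integral _ _ H) as [H0|H0].
      * rewrite (hC2 _ H0 i). ring.
      * rewrite (hR2 _ H0 j). ring.
  - rewrite Ht, <- sumR_scal. apply sumR_ext. intros m.
    rewrite (hC3 (sc m) (fun i => U i m)), (hR3 (tc m) (fun j => V j m)). fold (a m) (b m).
    unfold sc, tc. destruct (Rlt_dec 0 (a m * b m)) as [Hp|Hp].
    + assert (0 < a m) by (pose proof (hC1 (fun i => U i m)); fold (a m) in *; destruct (Rle_lt_or_eq_dec _ _ H); [auto|rewrite <- e in Hp; lra]).
      assert (0 < b m) by (pose proof (hR1 (fun j => V j m)); fold (b m) in *; nra).
      assert (Hq : 0 < b m / a m) by (apply Rdiv_lt_0_compat; auto).
      assert (0 < sqrt (b m / a m)) by (apply sqrt_lt_R0; auto).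
      pose proof (sqrt_sqrt _ (Rlt_le _ _ Hq)).
      rewrite (Rabs_pos_eq (sqrt _)) by lra. rewrite Rabs_pos_eq by (apply Rlt_le, Rinv_0_lt_compat; auto).
      set (s := sqrt (b m / a m)) in *.
      assert (s * s * a m = b m) by (rewrite H2; field; lra).
      field_simplify; [|lra]. simpl. field_simplify_eq; [|lra]. nra.
    + assert (a m * b m = 0). { pose proof (hC1 (fun i => U i m)). pose proof (hR1 (fun j => V j m)). fold (a m) (b m) in *. nra. }
      rewrite H, Rabs_R0. simpl. ring.
Qed.

End T.

Theorem proposition1 (N P : nat) (nC : (Fin N -> R) -> R) (nR : (Fin P -> R) -> R) :
  is_norm nC -> is_norm nR ->
  exists fD : Mat N P -> R,
    (forall X : Mat N P, fD_tends_to N P nC nR X (fD X)) /\ is_norm fD.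
Proof.
  intros HC HR.
  assert (Hex : forall X : Mat N P, exists v, is_inf (Tall N P nC nR X) v).
  { intros X. apply inf_exists.
    - destruct (T_nonempty N P nC nR X) as [t Ht]. exists t, P; auto.
    - intros x [M Hx]. exact (T_nonneg N P nC nR HC HR _ _ _ Hx). }
  set (fD := fun X => proj1_sig (constructive_indefinite_description _ (Hex X))).
  assert (HfD : forall X, is_inf (Tall N P nC nR X) (fD X)).
  { intros X. unfold fD. destruct (constructive_indefinite_description _ _); auto. }
  assert (Hpos : forall X, 0 <= fD X).
  { intros X. apply (proj2 (HfD X)). intros x [M Hx]. exact (T_nonneg N P nC nR HC HR _ _ _ Hx). }
  assert (Hhomle : forall a X, fD (fun ij => a * X ij) <= Rabs a * fD X).
  { intros a X. destruct (Req_dec a 0) as [Ha|Ha].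
    - subst a. rewrite Rabs_R0, Rmult_0_l. apply (proj1 (HfD _)). exists 0%nat. apply T_zero.
    - apply (inf_le _ _ _ (HfD _)). intros eps Heps.
      destruct (inf_approx _ _ (eps / Rabs a) (HfD X)) as [t [[M Ht] Hlt]].
      { apply Rdiv_lt_0_compat; auto. apply Rabs_pos_lt; auto. }
      exists (Rabs a * t). split. exists M. apply T_scale; auto.
      pose proof (Rabs_pos_lt a Ha).
      assert (Rabs a * t <= Rabs a * (fD X + eps / Rabs a)) by (apply Rmult_le_compat_l; lra).
      replace (Rabs a * (fD X + eps / Rabs a)) with (Rabs a * fD X + eps) in H0 by (field; lra). lra. }
  exists fD. split.
  - intros X eps Heps.
    destruct (inf_approx _ _ eps (HfD X) Heps) as [t [[M1 Ht] Hlt]].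
    exists (max M1 P). intros M HM.
    assert (HSne : exists x, decomp_vals N P nC nR M X x).
    { destruct (T_nonempty N P nC nR X) as [t0 Ht0]. exists t0. apply T_in_S; auto.
      eapply T_pad; eauto. lia. }
    destruct (inf_exists _ HSne (S_nonneg N P nC nR HC HR M X)) as [v Hv].
    exists v. split. split; auto.
    assert (v <= t). { apply (proj1 Hv). apply T_in_S; auto. eapply T_pad; eauto. lia. }
    assert (fD X <= v).
    { apply (proj2 Hv). intros x Hx. destruct (S_ge_T N P nC nR M X x Hx) as [t' [Ht' Hle]].
      pose proof (proj1 (HfD X) t' (ex_intro _ M Ht')). lra. }
    rewrite Rabs_pos_eq; lra.
  - split; [|split; [|split]].
    + auto.
    + intros X H0 [i j].
      destruct (coord_bound N nC HC) as [cC [HcC HbC]]. destruct (coord_bound P nR HR) as [cR [HcR HbR]].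
      assert (cC * cR * Rabs (X (i, j)) <= fD X).
      { apply (proj2 (HfD X)). intros x [M Hx]. eapply T_lower; eauto. }
      rewrite H0 in H. assert (0 < cC * cR) by nra. pose proof (Rabs_pos (X (i,j))).
      assert (Rabs (X (i, j)) = 0) by nra. destruct (Req_dec (X (i,j)) 0); auto. exfalso. pose proof (Rabs_pos_lt _ H4). lra.
    + intros a X. apply Rle_antisym; auto.
      destruct (Req_dec a 0) as [Ha|Ha].
      * subst a. rewrite Rabs_R0, Rmult_0_l. auto.
      * pose proof (Hhomle (/ a) (fun ij => a * X ij)).
        assert (Heq : fD (fun ij => / a * (a * X ij)) = fD X) by (f_equal; apply functional_extensionality; intros; field; auto).
        cbv beta in H. rewrite Heq in H. rewrite Rabs_inv in H. pose proof (Rabs_pos_lt a Ha).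
        apply Rmult_le_compat_l with (r := Rabs a) in H; [|lra].
        rewrite <- Rmult_assoc, Rinv_r, Rmult_1_l in H; lra.
    + intros X Y. apply (inf_le _ _ _ (HfD _)). intros eps Heps.
      destruct (inf_approx _ _ (eps/2) (HfD X)) as [t1 [[M1 Ht1] Hlt1]]. lra.
      destruct (inf_approx _ _ (eps/2) (HfD Y)) as [t2 [[M2 Ht2] Hlt2]]. lra.
      exists (t1 + t2). split. exists (M1 + M2)%nat. apply T_concat; auto. lra.
Qed.
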